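(* Let $V:S^2\to\mathbb R$ be smooth and let $\nabla V$ denote the Euclidean gradient of some smooth extension of $V$ to a neighbourhood of $S^2$ in $\mathbb R^3$. A smooth curve $\vec n:[0,T]\to S^2$ is a quantum Riemannian cubic with obstacle avoidance (for the potential $V$) if it satisfies, for all $t\in[0,T]$, $$P(\vec n)\Big(\ddddot{\vec n}+2\|\dot{\vec n}\|^2\ddot{\vec n}+4(\dot{\vec n}\cdot\ddot{\vec n})\,\dot{\vec n}+\|\ddot{\vec n}\|^2\vec n+\nabla V(\vec n)\Big)=0 .$$
   Context: $S^2\subset\mathbb R^3$ is the unit sphere with the round metric (induced by the Euclidean inner product ''$\cdot$''); $D_t$ denotes the Levi--Civita covariant derivative along a curve. For $\vec n\in S^2$, $P(\vec n)=I-\vec n\vec n^\top$ is the orthogonal projector of $\mathbb R^3$ onto $T_{\vec n}S^2$. For a smooth $V:S^2\to\mathbb R$, consider the action $$J[\vec n]=\int_0^T\Big[\tfrac12\|D_t\dot{\vec n}(t)\|^2+V(\vec n(t))\Big]dt .$$ A curve $\vec n:[0,T]\to S^2$ is called a quantum Riemannian cubic with obstacle avoidance if it is a critical point of $J$ under (smooth) variations that fix both $(\vec n(0),\dot{\vec n}(0))$ and $(\vec n(T),\dot{\vec n}(T))$. *)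

(* Defs.v *)
From Stdlib Require Import Reals List.
From Coquelicot Require Import Coquelicot.
Open Scope R_scope.

Definition v3 : Type := (R * R * R)%type.
Definition mk3 (a b c : R) : v3 := (a, b, c).
Definition c1 (u : v3) : R := fst (fst u).
Definition c2 (u : v3) : R := snd (fst u).
Definition c3 (u : v3) : R := snd u.
Definition v3zero : v3 := mk3 0 0 0.
Definition dot (u v : v3) : R := c1 u * c1 v + c2 u * c2 v + c3 u * c3 v.
Definition norm2 (u : v3) : R := dot u u.
Definition vadd (u v : v3) : v3 := mk3 (c1 u + c1 v) (c2 u + c2 v) (c3 u + c3 v).
Definition vscal (a : R) (u : v3) : v3 := mk3 (a * c1 u) (a * c2 u) (a * c3 u).

Definition onS2 (u : v3) : Prop := dot u u = 1.

Definition proj (n u : v3) : v3 := vadd u (vscal (- dot n u) n).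

Definition dn (k : nat) (c : R -> v3) (t : R) : v3 :=
  mk3 (Derive_n (fun t => c1 (c t)) k t)
      (Derive_n (fun t => c2 (c t)) k t)
      (Derive_n (fun t => c3 (c t)) k t).

Definition smooth1 (f : R -> R) : Prop :=
  forall (k : nat) (x : R), ex_derive (Derive_n f k) x.

Definition smooth_curve (c : R -> v3) : Prop :=
  smooth1 (fun t => c1 (c t)) /\ smooth1 (fun t => c2 (c t)) /\
  smooth1 (fun t => c3 (c t)).

(* Iterated partial derivatives of a function of two real variables (s,t):
   true = d/ds, false = d/dt. *)
Fixpoint pd2 (l : list bool) (f : R -> R -> R) : R -> R -> R :=
  match l with
  | nil => f
  | b :: l' => fun s t =>
      if b then Derive (fun s' => pd2 l' f s' t) s
      else Derive (fun t' => pd2 l' f s t') t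
  end.

Definition smooth2 (f : R -> R -> R) : Prop :=
  forall (l : list bool) (s t : R),
    ex_derive (fun s' => pd2 l f s' t) s /\
    ex_derive (fun t' => pd2 l f s t') t /\
    continuous (fun p : R * R => pd2 l f (fst p) (snd p)) (s, t).

Definition ev (i : nat) : v3 :=
  match i with 0 => mk3 1 0 0 | 1 => mk3 0 1 0 | _ => mk3 0 0 1 end.

Fixpoint pd3 (l : list nat) (f : v3 -> R) : v3 -> R :=
  match l with
  | nil => f
  | i :: l' => fun x => Derive (fun h => pd3 l' f (vadd x (vscal h (ev i)))) 0
  end.

Definition smooth3 (f : v3 -> R) : Prop :=
  forall (l : list nat) (i : nat) (x : v3),
    ex_derive (fun h => pd3 l f (vadd x (vscal h (ev i)))) 0 /\
    continuous (pd3 l f) x.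

Definition grad (f : v3 -> R) (x : v3) : v3 :=
  mk3 (pd3 (0%nat :: nil) f x) (pd3 (1%nat :: nil) f x) (pd3 (2%nat :: nil) f x).

(* Action J[n] = int_0^T (1/2 |D_t n'|^2 + V(n)) dt, where for a curve on S^2
   the Levi-Civita covariant derivative of the velocity is D_t n' = P(n) n''. *)
Definition action (T : R) (V : v3 -> R) (c : R -> v3) : R :=
  RInt (fun t => / 2 * norm2 (proj (c t) (dn 2 c t)) + V (c t)) 0 T.

Definition admissible_variation (T : R) (c : R -> v3) (N : R -> R -> v3) : Prop :=
  smooth2 (fun s t => c1 (N s t)) /\ smooth2 (fun s t => c2 (N s t)) /\
  smooth2 (fun s t => c3 (N s t)) /\
  (forall t, 0 <= t <= T -> N 0 t = c t) /\
  (forall s t, 0 <= t <= T -> onS2 (N s t)) /\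
  (forall s, N s 0 = c 0 /\ N s T = c T /\
             dn 1 (N s) 0 = dn 1 c 0 /\ dn 1 (N s) T = dn 1 c T).

Definition qrc_obstacle (T : R) (V : v3 -> R) (c : R -> v3) : Prop :=
  forall N, admissible_variation T c N ->
    is_derive (fun s => action T V (N s)) 0 0.

Definition EL_expr (V : v3 -> R) (c : R -> v3) (t : R) : v3 :=
  vadd (dn 4 c t)
   (vadd (vscal (2 * norm2 (dn 1 c t)) (dn 2 c t))
    (vadd (vscal (4 * dot (dn 1 c t) (dn 2 c t)) (dn 1 c t))
     (vadd (vscal (norm2 (dn 2 c t)) (c t)) (grad V (c t))))).

(* Main.v *)
Require Import Defs.
From Stdlib Require Import Reals Lra Lia List FunctionalExtensionality.
From Coquelicot Require Import Coquelicot.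
Import Defs.
Open Scope R_scope.

Definition F2 := R -> R -> R.
Definition ds (f : F2) : F2 := fun s t => Derive (fun s' => f s' t) s.
Definition dt (f : F2) : F2 := fun s t => Derive (fun t' => f s t') t.
Definition D0 (f : F2) : Prop := forall s t,
  ex_derive (fun s' => f s' t) s /\ ex_derive (fun t' => f s t') t /\
  continuity_2d_pt f s t.
Fixpoint Dn (n : nat) (f : F2) : Prop :=
  match n with
  | O => D0 f
  | S n => D0 f /\ Dn n (ds f) /\ Dn n (dt f)
  end.
Definition Sm (f : F2) : Prop := forall n, Dn n f.

Definition fpl (f g : F2) : F2 := fun s t => f s t + g s t.
Definition fmu (f g : F2) : F2 := fun s t => f s t * g s t.
Definition fop (f : F2) : F2 := fun s t => - f s t.
Definition fcs (a : R) : F2 := fun _ _ => a.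
Definition finv (f : F2) : F2 := fun s t => / f s t.
Definition fS : F2 := fun s _ => s.
Definition flift (g : R -> R) : F2 := fun _ t => g t.

Lemma Dn_D0 n f : Dn n f -> D0 f.
Proof. destruct n; simpl; tauto. Qed.

Lemma Dn_S n f : Dn (S n) f -> Dn n f.
Proof.
  revert f; induction n; intros f H; simpl in *.
  - tauto.
  - destruct H as [H0 [H1 H2]]. split; [exact H0|split; apply IHn; auto].
Qed.

Lemma Sm_D0 f : Sm f -> D0 f.
Proof. intros H; exact (H O). Qed.
Lemma Sm_ds f : Sm f -> Sm (ds f).
Proof. intros H n. destruct (H (S n)) as [_ [H1 _]]; auto. Qed.
Lemma Sm_dt f : Sm f -> Sm (dt f).
Proof. intros H n. destruct (H (S n)) as [_ [_ H1]]; auto. Qed.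

Lemma ds_fpl f g : D0 f -> D0 g -> ds (fpl f g) = fpl (ds f) (ds g).
Proof.
  intros Hf Hg. unfold ds, fpl. apply functional_extensionality; intro s;
  apply functional_extensionality; intro t.
  exact (Derive_plus (fun s' => f s' t) (fun s' => g s' t) s (proj1 (Hf s t)) (proj1 (Hg s t))).
Qed.
Lemma dt_fpl f g : D0 f -> D0 g -> dt (fpl f g) = fpl (dt f) (dt g).
Proof.
  intros Hf Hg. unfold dt, fpl. apply functional_extensionality; intro s;
  apply functional_extensionality; intro t.
  exact (Derive_plus (fun t' => f s t') (fun t' => g s t') t (proj1 (proj2 (Hf s t))) (proj1 (proj2 (Hg s t)))).
Qed.
Lemma ds_fmu f g : D0 f -> D0 g -> ds (fmu f g) = fpl (fmu (ds f) g) (fmu f (ds g)).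
Proof.
  intros Hf Hg. unfold ds, fpl, fmu. apply functional_extensionality; intro s;
  apply functional_extensionality; intro t.
  exact (Derive_mult (fun s' => f s' t) (fun s' => g s' t) s (proj1 (Hf s t)) (proj1 (Hg s t))).
Qed.
Lemma dt_fmu f g : D0 f -> D0 g -> dt (fmu f g) = fpl (fmu (dt f) g) (fmu f (dt g)).
Proof.
  intros Hf Hg. unfold dt, fpl, fmu. apply functional_extensionality; intro s;
  apply functional_extensionality; intro t.
  exact (Derive_mult (fun t' => f s t') (fun t' => g s t') t (proj1 (proj2 (Hf s t))) (proj1 (proj2 (Hg s t)))).
Qed.
Lemma ds_fop f : ds (fop f) = fop (ds f).
Proof.
  unfold ds, fop. apply functional_extensionality; intro s;
  apply functional_extensionality; intro t. exact (Derive_opp (fun s' => f s' t) s).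
Qed.
Lemma dt_fop f : dt (fop f) = fop (dt f).
Proof.
  unfold dt, fop. apply functional_extensionality; intro s;
  apply functional_extensionality; intro t. exact (Derive_opp (fun t' => f s t') t).
Qed.
Lemma ds_fcs a : ds (fcs a) = fcs 0.
Proof.
  unfold ds, fcs. apply functional_extensionality; intro s;
  apply functional_extensionality; intro t. apply (Derive_const _ _).
Qed.
Lemma dt_fcs a : dt (fcs a) = fcs 0.
Proof.
  unfold dt, fcs. apply functional_extensionality; intro s;
  apply functional_extensionality; intro t. apply (Derive_const _ _).
Qed.
Lemma ds_fS : ds fS = fcs 1.
Proof.
  unfold ds, fS, fcs. apply functional_extensionality; intro s;
  apply functional_extensionality; intro t. apply is_derive_unique. apply (is_derive_id s).
Qed.
Lemma dt_fS : dt fS = fcs 0.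
Proof.
  unfold dt, fS, fcs. apply functional_extensionality; intro s;
  apply functional_extensionality; intro t. apply (Derive_const _ _).
Qed.
Lemma ds_flift g : ds (flift g) = fcs 0.
Proof.
  unfold ds, flift, fcs. apply functional_extensionality; intro s;
  apply functional_extensionality; intro t. apply (Derive_const _ _).
Qed.
Lemma dt_flift g : dt (flift g) = flift (Derive g).
Proof. unfold dt, flift. apply functional_extensionality; intro s;
  apply functional_extensionality; intro t. apply Derive_ext. reflexivity. Qed.
Lemma ds_finv f : D0 f -> (forall s t, f s t <> 0) ->
  ds (finv f) = fop (fmu (ds f) (fmu (finv f) (finv f))).
Proof.
  intros Hf Hn. unfold ds, finv, fop, fmu. apply functional_extensionality; intro s;
  apply functional_extensionality; intro t.
  rewrite (Derive_inv (fun s' => f s' t) s (proj1 (Hf s t)) (Hn s t)). field. apply Hn.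
Qed.
Lemma dt_finv f : D0 f -> (forall s t, f s t <> 0) ->
  dt (finv f) = fop (fmu (dt f) (fmu (finv f) (finv f))).
Proof.
  intros Hf Hn. unfold dt, finv, fop, fmu. apply functional_extensionality; intro s;
  apply functional_extensionality; intro t.
  rewrite (Derive_inv (fun t' => f s t') t (proj1 (proj2 (Hf s t))) (Hn s t)). field. apply Hn.
Qed.

Lemma D0_fpl f g : D0 f -> D0 g -> D0 (fpl f g).
Proof.
  intros Hf Hg s t. destruct (Hf s t) as [a [b c]]; destruct (Hg s t) as [a' [b' c']].
  unfold fpl; split; [|split].
  - apply (ex_derive_plus (fun s' => f s' t) (fun s' => g s' t)); auto.
  - apply (ex_derive_plus (fun t' => f s t') (fun t' => g s t')); auto.
  - apply continuity_2d_pt_plus; auto.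
Qed.
Lemma D0_fmu f g : D0 f -> D0 g -> D0 (fmu f g).
Proof.
  intros Hf Hg s t. destruct (Hf s t) as [a [b c]]; destruct (Hg s t) as [a' [b' c']].
  unfold fmu; split; [|split].
  - apply (ex_derive_mult (fun s' => f s' t) (fun s' => g s' t)); auto.
  - apply (ex_derive_mult (fun t' => f s t') (fun t' => g s t')); auto.
  - apply continuity_2d_pt_mult; auto.
Qed.
Lemma D0_fop f : D0 f -> D0 (fop f).
Proof.
  intros Hf s t. destruct (Hf s t) as [a [b c]].
  unfold fop; split; [|split].
  - apply (ex_derive_opp (fun s' => f s' t)); auto.
  - apply (ex_derive_opp (fun t' => f s t')); auto.
  - apply continuity_2d_pt_opp; auto.
Qed.
Lemma D0_fcs a : D0 (fcs a).
Proof.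
  intros s t; unfold fcs; split; [|split].
  - apply (ex_derive_const (K := R_AbsRing) (V := R_NormedModule)).
  - apply (ex_derive_const (K := R_AbsRing) (V := R_NormedModule)).
  - apply continuity_2d_pt_const.
Qed.
Lemma D0_fS : D0 fS.
Proof.
  intros s t; unfold fS; split; [|split].
  - apply (ex_derive_id (K := R_AbsRing)).
  - apply (ex_derive_const (K := R_AbsRing) (V := R_NormedModule)).
  - apply continuity_2d_pt_id1.
Qed.
Lemma D0_finv f : D0 f -> (forall s t, f s t <> 0) -> D0 (finv f).
Proof.
  intros Hf Hn s t. destruct (Hf s t) as [a [b c]].
  unfold finv; split; [|split].
  - apply (ex_derive_inv (fun s' => f s' t)); auto.
  - apply (ex_derive_inv (fun t' => f s t')); auto.
  - apply continuity_2d_pt_inv; auto.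
Qed.
Lemma D0_flift g : smooth1 g -> D0 (flift g).
Proof.
  intros Hg s t; unfold flift; split; [|split].
  - apply (ex_derive_const (K := R_AbsRing) (V := R_NormedModule)).
  - exact (Hg O t).
  - apply (continuity_1d_2d_pt_comp g (fun _ v => v)).
    + apply continuity_pt_filterlim. apply (ex_derive_continuous (K := R_AbsRing) (V := R_NormedModule)). exact (Hg O t).
    + apply continuity_2d_pt_id2.
Qed.

Lemma Dn_fpl n : forall f g, Dn n f -> Dn n g -> Dn n (fpl f g).
Proof.
  induction n; intros f g Hf Hg; simpl in *.
  - apply D0_fpl; auto.
  - destruct Hf as [f0 [f1 f2]]; destruct Hg as [g0 [g1 g2]].
    split; [apply D0_fpl; auto|].
    rewrite ds_fpl, dt_fpl; auto.
Qed.
Lemma Dn_fop n : forall f, Dn n f -> Dn n (fop f).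
Proof.
  induction n; intros f Hf; simpl in *.
  - apply D0_fop; auto.
  - destruct Hf as [f0 [f1 f2]].
    split; [apply D0_fop; auto|].
    rewrite ds_fop, dt_fop; auto.
Qed.
Lemma Dn_fcs n a : Dn n (fcs a).
Proof.
  revert a; induction n; intros a; simpl.
  - apply D0_fcs.
  - rewrite ds_fcs, dt_fcs. split; [apply D0_fcs|auto].
Qed.
Lemma Dn_fmu n : forall f g, Dn n f -> Dn n g -> Dn n (fmu f g).
Proof.
  induction n; intros f g Hf Hg.
  - apply D0_fmu; auto.
  - pose proof (Dn_S _ _ Hf) as Hf'. pose proof (Dn_S _ _ Hg) as Hg'.
    simpl in *. destruct Hf as [f0 [f1 f2]]; destruct Hg as [g0 [g1 g2]].
    split; [apply D0_fmu; auto|].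
    rewrite ds_fmu, dt_fmu; auto.
    split; apply Dn_fpl; apply IHn; auto.
Qed.
Lemma Dn_fS n : Dn n fS.
Proof.
  destruct n; simpl.
  - apply D0_fS.
  - rewrite ds_fS, dt_fS. split; [apply D0_fS|split; apply Dn_fcs].
Qed.
Lemma Dn_finv n : forall f, (forall s t, f s t <> 0) -> Dn n f -> Dn n (finv f).
Proof.
  induction n; intros f Hn Hf.
  - apply D0_finv; auto.
  - pose proof (Dn_S _ _ Hf) as Hf'.
    simpl in *. destruct Hf as [f0 [f1 f2]].
    split; [apply D0_finv; auto|].
    rewrite ds_finv, dt_finv; auto.
    split; apply Dn_fop; apply Dn_fmu; auto; apply Dn_fmu; auto.
Qed.
Lemma smooth1_Derive g : smooth1 g -> smooth1 (Derive g).
Proof.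
  intros Hg k x.
  apply (ex_derive_ext (Derive_n g (S k))).
  - intros y. symmetry. rewrite (Derive_n_comp g k 1). f_equal. lia.
  - apply Hg.
Qed.
Lemma Dn_flift n : forall g, smooth1 g -> Dn n (flift g).
Proof.
  induction n; intros g Hg.
  - apply D0_flift; auto.
  - simpl. rewrite ds_flift, dt_flift. split; [apply D0_flift; auto|].
    split; [apply Dn_fcs| apply IHn, smooth1_Derive; auto].
Qed.

Lemma Sm_fpl f g : Sm f -> Sm g -> Sm (fpl f g).
Proof. intros Hf Hg n; apply Dn_fpl; auto. Qed.
Lemma Sm_fmu f g : Sm f -> Sm g -> Sm (fmu f g).
Proof. intros Hf Hg n; apply Dn_fmu; auto. Qed.
Lemma Sm_fop f : Sm f -> Sm (fop f).
Proof. intros Hf n; apply Dn_fop; auto. Qed.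
Lemma Sm_fcs a : Sm (fcs a).
Proof. intros n; apply Dn_fcs. Qed.
Lemma Sm_fS : Sm fS.
Proof. intros n; apply Dn_fS. Qed.
Lemma Sm_finv f : (forall s t, f s t <> 0) -> Sm f -> Sm (finv f).
Proof. intros Hn Hf n; apply Dn_finv; auto. Qed.
Lemma Sm_flift g : smooth1 g -> Sm (flift g).
Proof. intros Hg n; apply Dn_flift; auto. Qed.

Lemma v3_eta (u : v3) : u = mk3 (c1 u) (c2 u) (c3 u).
Proof. destruct u as [[a b] c]; reflexivity. Qed.
Lemma mk3_eq a b c a' b' c' : a = a' -> b = b' -> c = c' -> mk3 a b c = mk3 a' b' c'.
Proof. intros -> -> ->; reflexivity. Qed.

Definition pV (i : nat) (V : v3 -> R) : v3 -> R := pd3 (i :: nil) V.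

Lemma axis_translate (V : v3 -> R) (i : nat) (x : v3) (h0 : R) :
  ex_derive (fun h => V (vadd x (vscal h (ev i)))) 0 ->
  is_derive (fun h => V (vadd x (vscal (h - h0) (ev i)))) h0
     (pd3 (i :: nil) V x).
Proof.
  intros [l Hl].
  replace (pd3 (i :: nil) V x) with l.
  2:{ symmetry. apply is_derive_unique. exact Hl. }
  assert (Hg : is_derive (fun h : R => h - h0) h0 1).
  { auto_derive; auto; ring. }
  assert (H0 : h0 - h0 = 0) by ring.
  rewrite <- H0 in Hl.
  pose proof (is_derive_comp (fun h => V (vadd x (vscal h (ev i)))) (fun h => h - h0) h0 l 1 Hl Hg) as H.
  match type of H with is_derive _ _ ?v => replace v with l in H end.
  exact H. symmetry. apply Rmult_1_l.
Qed.

Lemma axis0 V (HV : smooth3 V) (b c h0 : R) :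
  is_derive (fun h => V (mk3 h b c)) h0 (pV 0 V (mk3 h0 b c)).
Proof.
  destruct (HV nil 0%nat (mk3 h0 b c)) as [Hd _].
  pose proof (axis_translate V 0 (mk3 h0 b c) h0 Hd) as H.
  eapply is_derive_ext; [|exact H]. intros h; simpl.
  f_equal. unfold vadd, vscal; apply mk3_eq; unfold c1, c2, c3, mk3; simpl; ring.
Qed.
Lemma axis1 V (HV : smooth3 V) (a c h0 : R) :
  is_derive (fun h => V (mk3 a h c)) h0 (pV 1 V (mk3 a h0 c)).
Proof.
  destruct (HV nil 1%nat (mk3 a h0 c)) as [Hd _].
  pose proof (axis_translate V 1 (mk3 a h0 c) h0 Hd) as H.
  eapply is_derive_ext; [|exact H]. intros h; simpl.
  f_equal. unfold vadd, vscal; apply mk3_eq; unfold c1, c2, c3, mk3; simpl; ring.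
Qed.
Lemma axis2 V (HV : smooth3 V) (a b h0 : R) :
  is_derive (fun h => V (mk3 a b h)) h0 (pV 2 V (mk3 a b h0)).
Proof.
  destruct (HV nil 2%nat (mk3 a b h0)) as [Hd _].
  pose proof (axis_translate V 2 (mk3 a b h0) h0 Hd) as H.
  eapply is_derive_ext; [|exact H]. intros h; simpl.
  f_equal. unfold vadd, vscal; apply mk3_eq; unfold c1, c2, c3, mk3; simpl; ring.
Qed.

Lemma pd3_app l i V : pd3 l (pd3 (i :: nil) V) = pd3 (l ++ i :: nil) V.
Proof.
  induction l as [|j l IH]; [reflexivity|].
  change (pd3 (j :: l) (pd3 (i::nil) V)) with
   (fun x => Derive (fun h => pd3 l (pd3 (i::nil) V) (vadd x (vscal h (ev j)))) 0).
  rewrite IH. reflexivity.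
Qed.
Lemma smooth3_pV i V : smooth3 V -> smooth3 (pV i V).
Proof.
  intros HV l j x. change (pV i V) with (pd3 (i :: nil) V). rewrite pd3_app. apply HV.
Qed.

Lemma cont_v3 (f : v3 -> R) (b : v3) : continuous f b ->
  forall eps, 0 < eps -> exists del, 0 < del /\ forall u1 u2 u3,
   Rabs (u1 - c1 b) < del -> Rabs (u2 - c2 b) < del -> Rabs (u3 - c3 b) < del ->
   Rabs (f (mk3 u1 u2 u3) - f b) < eps.
Proof.
  intros Hc eps He.
  pose proof (Hc (ball (f b) (mkposreal eps He)) (locally_ball _ _)) as H.
  destruct H as [d Hd]. exists d. split; [apply cond_pos|].
  intros u1 u2 u3 H1 H2 H3.
  specialize (Hd (mk3 u1 u2 u3)).
  destruct b as [[b1 b2] b3]. unfold c1, c2, c3 in *; simpl in *.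
  apply Hd. split; [split|]; assumption.
Qed.

Lemma mvt_helper (g dg : R -> R) (a b : R) : (forall u, is_derive g u (dg u)) ->
  exists xi, Rabs (xi - b) <= Rabs (a - b) /\ g a - g b = dg xi * (a - b).
Proof.
  intros Hg.
  destruct (MVT_gen g b a dg) as [c [Hc Heq]].
  - intros x _; apply Hg.
  - intros x _. apply continuity_pt_filterlim. apply (ex_derive_continuous (K := R_AbsRing) (V := R_NormedModule)).
    eexists; apply Hg.
  - exists c; split; auto.
    revert Hc; unfold Rmin, Rmax; destruct (Rle_dec b a); intros Hc;
    unfold Rabs; repeat destruct Rcase_abs; lra.
Qed.

Lemma prod_bound x y e K : Rabs x <= e -> Rabs y <= K -> Rabs (x * y) <= e * K.
Proof.
  intros H1 H2. rewrite Rabs_mult. apply Rmult_le_compat; auto; apply Rabs_pos.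
Qed.

Lemma chain3 V (HV : smooth3 V) x1 x2 x3 s0 d1 d2 d3 :
  is_derive x1 s0 d1 -> is_derive x2 s0 d2 -> is_derive x3 s0 d3 ->
  is_derive (fun s => V (mk3 (x1 s) (x2 s) (x3 s))) s0
   (pV 0 V (mk3 (x1 s0) (x2 s0) (x3 s0)) * d1 +
    pV 1 V (mk3 (x1 s0) (x2 s0) (x3 s0)) * d2 +
    pV 2 V (mk3 (x1 s0) (x2 s0) (x3 s0)) * d3).
Proof.
  intros H1 H2 H3.
  rewrite is_derive_Reals in H1, H2, H3 |- *.
  set (b := mk3 (x1 s0) (x2 s0) (x3 s0)).
  set (P0 := pV 0 V b). set (P1 := pV 1 V b). set (P2 := pV 2 V b).
  intros eps He.
  set (K := 1 + Rabs d1 + Rabs d2 + Rabs d3 + Rabs P0 + Rabs P1 + Rabs P2).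
  assert (HK : 1 <= K).
  { unfold K. pose proof (Rabs_pos d1); pose proof (Rabs_pos d2); pose proof (Rabs_pos d3);
    pose proof (Rabs_pos P0); pose proof (Rabs_pos P1); pose proof (Rabs_pos P2); lra. }
  set (e := Rmin 1 (eps / (7 * K))).
  assert (He0 : 0 < e).
  { unfold e. apply Rmin_pos; [lra|]. apply Rdiv_lt_0_compat; lra. }
  assert (He1 : e <= 1) by apply Rmin_l.
  assert (He2 : e * (7 * K) <= eps).
  { assert (e <= eps / (7 * K)) by apply Rmin_r.
    apply (Rmult_le_compat_r (7 * K)) in H; [|lra].
    replace (eps / (7 * K) * (7 * K)) with eps in H by (field; lra). exact H. }
  destruct (H1 e He0) as [dl1 Hd1].
  destruct (H2 e He0) as [dl2 Hd2].
  destruct (H3 e He0) as [dl3 Hd3].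
  destruct (cont_v3 (pV 0 V) b (proj2 (HV (0%nat :: nil) 0%nat b)) e He0) as [dv0 [Hdv0 Hc0]].
  destruct (cont_v3 (pV 1 V) b (proj2 (HV (1%nat :: nil) 0%nat b)) e He0) as [dv1 [Hdv1 Hc1]].
  destruct (cont_v3 (pV 2 V) b (proj2 (HV (2%nat :: nil) 0%nat b)) e He0) as [dv2 [Hdv2 Hc2]].
  set (dv := Rmin dv0 (Rmin dv1 dv2)).
  assert (Hdv : 0 < dv) by (unfold dv; repeat apply Rmin_pos; auto).
  assert (Hdvl : dv <= dv0 /\ dv <= dv1 /\ dv <= dv2).
  { unfold dv. pose proof (Rmin_l dv0 (Rmin dv1 dv2)); pose proof (Rmin_r dv0 (Rmin dv1 dv2));
    pose proof (Rmin_l dv1 dv2); pose proof (Rmin_r dv1 dv2); lra. }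
  assert (Hpos : 0 < Rmin (Rmin dl1 dl2) (Rmin dl3 (dv / K))).
  { repeat apply Rmin_pos; try apply cond_pos. apply Rdiv_lt_0_compat; lra. }
  exists (mkposreal _ Hpos). intros h Hh0 Hh. simpl in Hh.
  assert (Hh1 : Rabs h < dl1 /\ Rabs h < dl2 /\ Rabs h < dl3 /\ Rabs h < dv / K).
  { pose proof (Rmin_l (Rmin dl1 dl2) (Rmin dl3 (dv / K)));
    pose proof (Rmin_r (Rmin dl1 dl2) (Rmin dl3 (dv / K)));
    pose proof (Rmin_l dl1 dl2); pose proof (Rmin_r dl1 dl2);
    pose proof (Rmin_l dl3 (dv / K)); pose proof (Rmin_r dl3 (dv / K)); lra. }
  destruct Hh1 as [Ha1 [Ha2 [Ha3 Ha4]]].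
  specialize (Hd1 h Hh0 Ha1). specialize (Hd2 h Hh0 Ha2). specialize (Hd3 h Hh0 Ha3).
  set (a1 := x1 (s0 + h)) in *. set (a2 := x2 (s0 + h)) in *. set (a3 := x3 (s0 + h)) in *.
  set (B1 := x1 s0) in *. set (B2 := x2 s0) in *. set (B3 := x3 s0) in *.
  set (r1 := (a1 - B1) / h) in *. set (r2 := (a2 - B2) / h) in *. set (r3 := (a3 - B3) / h) in *.
  assert (Hr1 : Rabs r1 <= K).
  { assert (Rabs r1 <= Rabs d1 + 1).
    { replace r1 with (d1 + (r1 - d1)) by ring.
      eapply Rle_trans; [apply Rabs_triang|]. lra. }
    unfold K; pose proof (Rabs_pos d2); pose proof (Rabs_pos d3);
    pose proof (Rabs_pos P0); pose proof (Rabs_pos P1); pose proof (Rabs_pos P2); lra. }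
  assert (Hr2 : Rabs r2 <= K).
  { assert (Rabs r2 <= Rabs d2 + 1).
    { replace r2 with (d2 + (r2 - d2)) by ring.
      eapply Rle_trans; [apply Rabs_triang|]. lra. }
    unfold K; pose proof (Rabs_pos d1); pose proof (Rabs_pos d3);
    pose proof (Rabs_pos P0); pose proof (Rabs_pos P1); pose proof (Rabs_pos P2); lra. }
  assert (Hr3 : Rabs r3 <= K).
  { assert (Rabs r3 <= Rabs d3 + 1).
    { replace r3 with (d3 + (r3 - d3)) by ring.
      eapply Rle_trans; [apply Rabs_triang|]. lra. }
    unfold K; pose proof (Rabs_pos d1); pose proof (Rabs_pos d2);
    pose proof (Rabs_pos P0); pose proof (Rabs_pos P1); pose proof (Rabs_pos P2); lra. }
  assert (Hsmall : forall a B r, r = (a - B) / h -> Rabs r <= K -> Rabs (a - B) < dv).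
  { intros a B r Hr HrK.
    replace (a - B) with (r * h) by (rewrite Hr; field; auto).
    rewrite Rabs_mult.
    assert (Rabs h * K < dv).
    { apply (Rmult_lt_compat_r K) in Ha4; [|lra].
      replace (dv / K * K) with dv in Ha4 by (field; lra). exact Ha4. }
    assert (Rabs r * Rabs h <= K * Rabs h).
    { apply Rmult_le_compat_r; auto; apply Rabs_pos. }
    lra. }
  pose proof (Hsmall a1 B1 r1 eq_refl Hr1) as Hs1.
  pose proof (Hsmall a2 B2 r2 eq_refl Hr2) as Hs2.
  pose proof (Hsmall a3 B3 r3 eq_refl Hr3) as Hs3.
  destruct (mvt_helper (fun u => V (mk3 u a2 a3)) (fun u => pV 0 V (mk3 u a2 a3)) a1 B1
             (axis0 V HV a2 a3)) as [xi1 [Hxi1 E1]].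
  destruct (mvt_helper (fun u => V (mk3 B1 u a3)) (fun u => pV 1 V (mk3 B1 u a3)) a2 B2
             (axis1 V HV B1 a3)) as [xi2 [Hxi2 E2]].
  destruct (mvt_helper (fun u => V (mk3 B1 B2 u)) (fun u => pV 2 V (mk3 B1 B2 u)) a3 B3
             (axis2 V HV B1 B2)) as [xi3 [Hxi3 E3]].
  simpl in E1, E2, E3.
  set (Q0 := pV 0 V (mk3 xi1 a2 a3)) in *.
  set (Q1 := pV 1 V (mk3 B1 xi2 a3)) in *.
  set (Q2 := pV 2 V (mk3 B1 B2 xi3)) in *.
  assert (HQ0 : Rabs (Q0 - P0) < e).
  { apply Hc0; unfold b, c1, c2, c3, mk3; simpl; lra. }
  assert (HQ1 : Rabs (Q1 - P1) < e).
  { assert (Z : forall u, Rabs (u - u) < dv1) by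
      (intros u; unfold Rminus; rewrite Rplus_opp_r, Rabs_R0; auto).
    apply Hc1; unfold b, c1, c2, c3, mk3; simpl; try apply Z; lra. }
  assert (HQ2 : Rabs (Q2 - P2) < e).
  { assert (Z : forall u, Rabs (u - u) < dv2) by
      (intros u; unfold Rminus; rewrite Rplus_opp_r, Rabs_R0; auto).
    apply Hc2; unfold b, c1, c2, c3, mk3; simpl; try apply Z; lra. }
  assert (Etot : (V (mk3 a1 a2 a3) - V b) / h - (P0 * d1 + P1 * d2 + P2 * d3)
     = (Q0 - P0) * r1 + P0 * (r1 - d1) + ((Q1 - P1) * r2 + P1 * (r2 - d2))
       + ((Q2 - P2) * r3 + P2 * (r3 - d3))).
  { replace (V (mk3 a1 a2 a3) - V b) with
      ((V (mk3 a1 a2 a3) - V (mk3 B1 a2 a3)) + (V (mk3 B1 a2 a3) - V (mk3 B1 B2 a3))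
       + (V (mk3 B1 B2 a3) - V (mk3 B1 B2 B3))) by (unfold b; ring).
    rewrite E1, E2, E3. unfold r1, r2, r3. field. auto. }
  change (mk3 B1 B2 B3) with b. rewrite Etot.
  assert (B0 : forall Q P r d, Rabs (Q - P) < e -> Rabs r <= K -> Rabs (r - d) < e ->
     Rabs P <= K -> Rabs ((Q - P) * r + P * (r - d)) <= 2 * e * K).
  { intros Q P r d Hq Hr Hd Hp.
    eapply Rle_trans; [apply Rabs_triang|].
    pose proof (prod_bound (Q - P) r e K ltac:(lra) Hr).
    pose proof (prod_bound (r - d) P e K ltac:(lra) Hp).
    rewrite (Rmult_comm P). lra. }
  assert (HP0 : Rabs P0 <= K).
  { unfold K; pose proof (Rabs_pos d1); pose proof (Rabs_pos d2); pose proof (Rabs_pos d3);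
    pose proof (Rabs_pos P1); pose proof (Rabs_pos P2); lra. }
  assert (HP1 : Rabs P1 <= K).
  { unfold K; pose proof (Rabs_pos d1); pose proof (Rabs_pos d2); pose proof (Rabs_pos d3);
    pose proof (Rabs_pos P0); pose proof (Rabs_pos P2); lra. }
  assert (HP2 : Rabs P2 <= K).
  { unfold K; pose proof (Rabs_pos d1); pose proof (Rabs_pos d2); pose proof (Rabs_pos d3);
    pose proof (Rabs_pos P0); pose proof (Rabs_pos P1); lra. }
  pose proof (B0 Q0 P0 r1 d1 HQ0 Hr1 Hd1 HP0).
  pose proof (B0 Q1 P1 r2 d2 HQ1 Hr2 Hd2 HP1).
  pose proof (B0 Q2 P2 r3 d3 HQ2 Hr3 Hd3 HP2).
  eapply Rle_lt_trans; [apply Rabs_triang|].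
  eapply Rle_lt_trans; [apply Rplus_le_compat_r; apply Rabs_triang|].
  nra.
Qed.

Definition fV (V : v3 -> R) (f1 f2 f3 : F2) : F2 :=
  fun s t => V (mk3 (f1 s t) (f2 s t) (f3 s t)).

Lemma D0_fV V f1 f2 f3 : smooth3 V -> D0 f1 -> D0 f2 -> D0 f3 -> D0 (fV V f1 f2 f3).
Proof.
  intros HV H1 H2 H3 s t. unfold fV. split; [|split].
  - eexists. apply (chain3 V HV (fun s' => f1 s' t) (fun s' => f2 s' t) (fun s' => f3 s' t) s);
    apply Derive_correct; [exact (proj1 (H1 s t))|exact (proj1 (H2 s t))|exact (proj1 (H3 s t))].
  - eexists. apply (chain3 V HV (fun t' => f1 s t') (fun t' => f2 s t') (fun t' => f3 s t') t);
    apply Derive_correct; [exact (proj1 (proj2 (H1 s t)))|exact (proj1 (proj2 (H2 s t)))|exact (proj1 (proj2 (H3 s t)))].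
  - intros eps.
    destruct (cont_v3 V (mk3 (f1 s t) (f2 s t) (f3 s t)) (proj2 (HV nil 0%nat _)) eps (cond_pos eps))
      as [del [Hdel Hc]].
    destruct (H1 s t) as [_ [_ C1]]. destruct (H2 s t) as [_ [_ C2]]. destruct (H3 s t) as [_ [_ C3]].
    specialize (C1 (mkposreal del Hdel)). specialize (C2 (mkposreal del Hdel)).
    specialize (C3 (mkposreal del Hdel)).
    pose proof (locally_2d_and _ _ _ _ C1 (locally_2d_and _ _ _ _ C2 C3)) as C.
    eapply locally_2d_impl; [|exact C].
    apply locally_2d_forall. intros u v [D1 [D2 D3]]. simpl in D1, D2, D3.
    apply Hc; assumption.
Qed.

Lemma ds_fV V f1 f2 f3 : smooth3 V -> D0 f1 -> D0 f2 -> D0 f3 ->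
  ds (fV V f1 f2 f3) = fpl (fpl (fmu (fV (pV 0 V) f1 f2 f3) (ds f1))
       (fmu (fV (pV 1 V) f1 f2 f3) (ds f2))) (fmu (fV (pV 2 V) f1 f2 f3) (ds f3)).
Proof.
  intros HV H1 H2 H3. apply functional_extensionality; intro s;
  apply functional_extensionality; intro t.
  unfold ds, fV, fpl, fmu. apply is_derive_unique.
  apply (chain3 V HV (fun s' => f1 s' t) (fun s' => f2 s' t) (fun s' => f3 s' t) s);
    apply Derive_correct; [exact (proj1 (H1 s t))|exact (proj1 (H2 s t))|exact (proj1 (H3 s t))].
Qed.
Lemma dt_fV V f1 f2 f3 : smooth3 V -> D0 f1 -> D0 f2 -> D0 f3 ->
  dt (fV V f1 f2 f3) = fpl (fpl (fmu (fV (pV 0 V) f1 f2 f3) (dt f1))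
       (fmu (fV (pV 1 V) f1 f2 f3) (dt f2))) (fmu (fV (pV 2 V) f1 f2 f3) (dt f3)).
Proof.
  intros HV H1 H2 H3. apply functional_extensionality; intro s;
  apply functional_extensionality; intro t.
  unfold dt, fV, fpl, fmu. apply is_derive_unique.
  apply (chain3 V HV (fun t' => f1 s t') (fun t' => f2 s t') (fun t' => f3 s t') t);
    apply Derive_correct; [exact (proj1 (proj2 (H1 s t)))|exact (proj1 (proj2 (H2 s t)))|exact (proj1 (proj2 (H3 s t)))].
Qed.

Lemma Dn_fV n : forall V f1 f2 f3, smooth3 V -> Dn n f1 -> Dn n f2 -> Dn n f3 ->
  Dn n (fV V f1 f2 f3).
Proof.
  induction n; intros V f1 f2 f3 HV H1 H2 H3.
  - apply D0_fV; auto.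
  - pose proof (Dn_S _ _ H1) as H1'. pose proof (Dn_S _ _ H2) as H2'.
    pose proof (Dn_S _ _ H3) as H3'.
    simpl in H1, H2, H3. destruct H1 as [a1 [b1 c1']]; destruct H2 as [a2 [b2 c2']];
    destruct H3 as [a3 [b3 c3']].
    simpl. split; [apply D0_fV; auto|].
    rewrite ds_fV, dt_fV; auto.
    split; repeat apply Dn_fpl; apply Dn_fmu; auto; apply IHn; auto; apply smooth3_pV; auto.
Qed.
Lemma Sm_fV V f1 f2 f3 : smooth3 V -> Sm f1 -> Sm f2 -> Sm f3 -> Sm (fV V f1 f2 f3).
Proof. intros HV H1 H2 H3 n; apply Dn_fV; auto. Qed.

Lemma ds_dt f : Sm f -> ds (dt f) = dt (ds f).
Proof.
  intros Hf. apply functional_extensionality; intro s;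
  apply functional_extensionality; intro t.
  pose proof (Sm_D0 _ Hf) as F0.
  pose proof (Sm_D0 _ (Sm_dt _ Hf)) as F1.
  pose proof (Sm_D0 _ (Sm_ds _ Hf)) as F2.
  pose proof (Sm_D0 _ (Sm_ds _ (Sm_dt _ Hf))) as F3.
  pose proof (Sm_D0 _ (Sm_dt _ (Sm_ds _ Hf))) as F4.
  exact (Schwarz f s t
    (locally_2d_forall _ s t (fun u v => conj (proj1 (F0 u v)) (conj (proj1 (proj2 (F0 u v)))
        (conj (proj1 (F1 u v)) (proj1 (proj2 (F2 u v)))))))
    (proj2 (proj2 (F3 s t))) (proj2 (proj2 (F4 s t)))).
Qed.

Lemma pd2_true f : pd2 (true :: nil) f = ds f.
Proof. reflexivity. Qed.
Lemma pd2_false f : pd2 (false :: nil) f = dt f.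
Proof. reflexivity. Qed.
Lemma pd2_app l b f : pd2 (l ++ b :: nil) f = pd2 l (pd2 (b :: nil) f).
Proof.
  induction l as [|b0 l IH]; [reflexivity|].
  destruct b0.
  - change (pd2 (true :: l) (pd2 (b :: nil) f)) with
      (fun s t => Derive (fun s' => pd2 l (pd2 (b :: nil) f) s' t) s).
    rewrite <- IH. reflexivity.
  - change (pd2 (false :: l) (pd2 (b :: nil) f)) with
      (fun s t => Derive (fun t' => pd2 l (pd2 (b :: nil) f) s t') t).
    rewrite <- IH. reflexivity.
Qed.

Lemma Dn_pd2 n : forall f, Dn n f -> forall l, (length l <= n)%nat -> D0 (pd2 l f).
Proof.
  induction n; intros f Hf l Hl.
  - destruct l; [exact Hf| simpl in Hl; lia].
  - destruct (rev l) as [|b l'] eqn:E.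
    + assert (l = nil). { rewrite <- (rev_involutive l), E. reflexivity. }
      subst. simpl. apply (Dn_D0 _ _ Hf).
    + assert (El : l = rev l' ++ b :: nil).
      { rewrite <- (rev_involutive l), E. reflexivity. }
      rewrite El, pd2_app. simpl in Hf. destruct Hf as [_ [Hs Ht]].
      assert (length (rev l') <= n)%nat.
      { rewrite El, length_app in Hl. simpl in Hl. lia. }
      destruct b; [rewrite pd2_true | rewrite pd2_false]; apply IHn; auto.
Qed.

Lemma pd2_Dn n : forall f, (forall l, (length l <= n)%nat -> D0 (pd2 l f)) -> Dn n f.
Proof.
  induction n; intros f H.
  - apply (H nil). simpl; lia.
  - simpl. split; [apply (H nil); simpl; lia|].
    split; apply IHn; intros l Hl.
    + rewrite <- pd2_true, <- pd2_app. apply H. rewrite length_app; simpl; lia.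
    + rewrite <- pd2_false, <- pd2_app. apply H. rewrite length_app; simpl; lia.
Qed.

Lemma smooth2_Sm f : smooth2 f -> Sm f.
Proof.
  intros H n. apply pd2_Dn. intros l _ s t.
  destruct (H l s t) as [a [b c]]. split; [exact a|split; [exact b|]].
  apply continuity_2d_pt_filterlim. exact c.
Qed.
Lemma Sm_smooth2 f : Sm f -> smooth2 f.
Proof.
  intros H l s t.
  destruct (Dn_pd2 (length l) f (H _) l (le_n _) s t) as [a [b c]].
  split; [exact a|split; [exact b|]].
  apply continuity_2d_pt_filterlim. exact c.
Qed.

Ltac sm := repeat first [ assumption | apply Sm_fpl | apply Sm_fmu | apply Sm_fop | apply Sm_fcs
  | apply Sm_fS | apply Sm_fV | apply smooth3_pV | apply Sm_ds | apply Sm_dt ].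
Ltac d0 := apply Sm_D0; sm.
Ltac expand := repeat first [ rewrite ds_fpl by d0 | rewrite dt_fpl by d0
  | rewrite ds_fmu by d0 | rewrite dt_fmu by d0 | rewrite ds_fop | rewrite dt_fop
  | rewrite ds_fcs | rewrite dt_fcs
  | rewrite ds_fV by first [d0 | sm] | rewrite dt_fV by first [d0 | sm] ].

Lemma locally_open_interval (T t : R) : 0 < t < T -> locally t (fun y => 0 < y < T).
Proof.
  intros Ht. apply (locally_interval _ t (Finite 0) (Finite T)); simpl; try lra.
  intros y H1 H2; lra.
Qed.

Definition Zf (T : R) (f : F2) : Prop := forall s t, 0 < t < T -> f s t = 0.

Lemma Zf_ds T f : Zf T f -> Zf T (ds f).
Proof.
  intros Hf s t Ht. unfold ds.
  rewrite (Derive_ext (fun s' => f s' t) (fun _ => 0)); [apply (Derive_const _ _)|].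
  intros s'; apply Hf; auto.
Qed.
Lemma Zf_dt T f : Zf T f -> Zf T (dt f).
Proof.
  intros Hf s t Ht. unfold dt.
  rewrite (Derive_ext_loc (fun t' => f s t') (fun _ => 0)); [apply (Derive_const _ _)|].
  eapply filter_imp; [|apply (locally_open_interval T t Ht)].
  intros y Hy; apply Hf; auto.
Qed.

Definition sum3 (f1 f2 f3 : F2) : F2 := fpl (fpl f1 f2) f3.
Definition dot3 (a1 a2 a3 b1 b2 b3 : F2) : F2 := sum3 (fmu a1 b1) (fmu a2 b2) (fmu a3 b3).

Definition FintD (V : v3 -> R) (n1 n2 n3 : F2) : F2 :=
  let p1 := dt (dt n1) in let p2 := dt (dt n2) in let p3 := dt (dt n3) in
  fpl (fmu (fcs (/2)) (fpl (dot3 p1 p2 p3 p1 p2 p3)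
        (fop (fmu (dot3 n1 n2 n3 p1 p2 p3) (dot3 n1 n2 n3 p1 p2 p3)))))
      (fV V n1 n2 n3).

Definition GD (n1 n2 n3 : F2) : F2 :=
  let p1 := dt (dt n1) in let p2 := dt (dt n2) in let p3 := dt (dt n3) in
  let q1 := dt n1 in let q2 := dt n2 in let q3 := dt n3 in
  let w1 := ds n1 in let w2 := ds n2 in let w3 := ds n3 in
  fpl (fpl (dot3 p1 p2 p3 (dt w1) (dt w2) (dt w3))
           (fop (dot3 (dt p1) (dt p2) (dt p3) w1 w2 w3)))
      (fop (fmu (fmu (fcs 2) (dot3 q1 q2 q3 q1 q2 q3)) (dot3 q1 q2 q3 w1 w2 w3))).

Lemma alg_proj (n1 n2 n3 u1 u2 u3 : R) : n1*n1+n2*n2+n3*n3 = 1 ->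
  norm2 (proj (mk3 n1 n2 n3) (mk3 u1 u2 u3)) =
  (u1*u1+u2*u2+u3*u3) - (n1*u1+n2*u2+n3*u3)*(n1*u1+n2*u2+n3*u3).
Proof.
  intros H. unfold norm2, proj, dot, vadd, vscal, mk3, c1, c2, c3; simpl.
  set (k := n1*u1+n2*u2+n3*u3).
  assert (E : (u1 + - k * n1) * (u1 + - k * n1) + (u2 + - k * n2) * (u2 + - k * n2) +
     (u3 + - k * n3) * (u3 + - k * n3) = (u1*u1+u2*u2+u3*u3) - 2*k*k + k*k*(n1*n1+n2*n2+n3*n3))
    by (unfold k; ring).
  rewrite E, H. ring.
Qed.

Lemma dn2_eq (M : R -> v3) t :
  dn 2 M t = mk3 (dt (dt (fun s t => c1 (M t))) 0 t) (dt (dt (fun s t => c2 (M t))) 0 t)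
                 (dt (dt (fun s t => c3 (M t))) 0 t).
Proof. reflexivity. Qed.

Lemma L_action T V N (HT : 0 < T) (HSN : forall s t, 0 <= t <= T -> onS2 (N s t)) s :
  action T V (N s) = RInt (FintD V (fun s t => c1 (N s t)) (fun s t => c2 (N s t))
        (fun s t => c3 (N s t)) s) 0 T.
Proof.
  unfold action. apply RInt_ext. intros t Ht.
  rewrite Rmin_left, Rmax_right in Ht by lra.
  assert (HS : c1 (N s t) * c1 (N s t) + c2 (N s t) * c2 (N s t) + c3 (N s t) * c3 (N s t) = 1).
  { apply (HSN s t); lra. }
  rewrite (dn2_eq (N s) t).
  rewrite (v3_eta (N s t)) at 1 2.
  rewrite alg_proj by exact HS.
  unfold FintD, dot3, sum3, fpl, fmu, fcs, fop, fV. reflexivity.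
Qed.

Lemma Sm_FintD V n1 n2 n3 : smooth3 V -> Sm n1 -> Sm n2 -> Sm n3 -> Sm (FintD V n1 n2 n3).
Proof. intros. unfold FintD, dot3, sum3. cbv zeta. sm. Qed.
Lemma Sm_GD n1 n2 n3 : Sm n1 -> Sm n2 -> Sm n3 -> Sm (GD n1 n2 n3).
Proof. intros. unfold GD, dot3, sum3. cbv zeta. sm. Qed.

Lemma L_deriv (F : F2) (T : R) : Sm F ->
  is_derive (fun s => RInt (F s) 0 T) 0 (RInt (ds F 0) 0 T).
Proof.
  intros HF. pose proof (Sm_D0 _ HF) as D. pose proof (Sm_D0 _ (Sm_ds _ HF)) as Ds.
  exact (is_derive_RInt_param F 0 T 0
    (filter_forall _ (fun x0 t _ => proj1 (D x0 t)))
    (fun t _ => proj2 (proj2 (Ds 0 t)))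
    (filter_forall _ (fun y => ex_RInt_continuous (F y) 0 T
       (fun z _ => ex_derive_continuous (K := R_AbsRing) (V := R_NormedModule) _ _
                      (proj1 (proj2 (D y z))))))).
Qed.

Lemma L_split (F G : F2) (T : R) : Sm F -> Sm G -> G 0 0 = 0 -> G 0 T = 0 ->
  RInt (ds F 0) 0 T = RInt (fun t => ds F 0 t - dt G 0 t) 0 T.
Proof.
  intros HF HG HG0 HGT.
  pose proof (Sm_D0 _ (Sm_ds _ HF)) as Ds. pose proof (Sm_D0 _ (Sm_dt _ HG)) as Dt.
  pose proof (Sm_D0 _ HG) as D.
  assert (E1 : ex_RInt (ds F 0) 0 T).
  { apply (ex_RInt_continuous (V := R_CompleteNormedModule)). intros z _.
    exact (ex_derive_continuous (K := R_AbsRing) (V := R_NormedModule) _ _ (proj1 (proj2 (Ds 0 z)))). }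
  assert (E2 : ex_RInt (dt G 0) 0 T).
  { apply (ex_RInt_continuous (V := R_CompleteNormedModule)). intros z _.
    exact (ex_derive_continuous (K := R_AbsRing) (V := R_NormedModule) _ _ (proj1 (proj2 (Dt 0 z)))). }
  assert (I2 : RInt (dt G 0) 0 T = 0).
  { apply (is_RInt_unique (V := R_CompleteNormedModule)).
    replace 0 with (minus (G 0 T) (G 0 0)) at 3.
    2:{ rewrite HG0, HGT. unfold minus, plus, opp; simpl. apply Rplus_opp_r. }
    apply (is_RInt_derive (V := R_CompleteNormedModule) (G 0) (dt G 0)).
    - intros x _. apply Derive_correct. exact (proj1 (proj2 (D 0 x))).
    - intros x _.
      exact (ex_derive_continuous (K := R_AbsRing) (V := R_NormedModule) _ _ (proj1 (proj2 (Dt 0 x)))). }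
  pose proof (RInt_minus (V := R_CompleteNormedModule) (ds F 0) (dt G 0) 0 T E1 E2) as Em.
  unfold minus, plus, opp in Em; simpl in Em.
  change (fun t : R => ds F 0 t - dt G 0 t) with (fun t : R => ds F 0 t + - dt G 0 t).
  rewrite Em, I2. symmetry. rewrite Ropp_0. apply Rplus_0_r.
Qed.

Definition f0 (n1 n2 n3 : F2) : F2 := fpl (dot3 n1 n2 n3 n1 n2 n3) (fcs (-1)).

Lemma K1_lem T n1 n2 n3 t : Sm n1 -> Sm n2 -> Sm n3 -> Zf T (f0 n1 n2 n3) -> 0 < t < T ->
  n1 0 t * ds n1 0 t + n2 0 t * ds n2 0 t + n3 0 t * ds n3 0 t = 0.
Proof.
  intros S1 S2 S3 HZ Ht. pose proof (Zf_ds _ _ HZ 0 t Ht) as K. revert K.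
  unfold f0, dot3, sum3. expand. unfold fpl, fmu, fcs. intro K. nra.
Qed.

Lemma K3_lem T n1 n2 n3 t : Sm n1 -> Sm n2 -> Sm n3 -> Zf T (f0 n1 n2 n3) -> 0 < t < T ->
  (dt n1 0 t * dt n1 0 t + dt n2 0 t * dt n2 0 t + dt n3 0 t * dt n3 0 t) +
  (n1 0 t * dt (dt n1) 0 t + n2 0 t * dt (dt n2) 0 t + n3 0 t * dt (dt n3) 0 t) = 0.
Proof.
  intros S1 S2 S3 HZ Ht. pose proof (Zf_dt _ _ (Zf_dt _ _ HZ) 0 t Ht) as K. revert K.
  unfold f0, dot3, sum3. expand. unfold fpl, fmu, fcs. intro K. nra.
Qed.

Lemma K4_lem T n1 n2 n3 t : Sm n1 -> Sm n2 -> Sm n3 -> Zf T (f0 n1 n2 n3) -> 0 < t < T ->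
  (ds n1 0 t * dt (dt n1) 0 t + ds n2 0 t * dt (dt n2) 0 t + ds n3 0 t * dt (dt n3) 0 t) +
  2 * (dt n1 0 t * dt (ds n1) 0 t + dt n2 0 t * dt (ds n2) 0 t + dt n3 0 t * dt (ds n3) 0 t) +
  (n1 0 t * dt (dt (ds n1)) 0 t + n2 0 t * dt (dt (ds n2)) 0 t + n3 0 t * dt (dt (ds n3)) 0 t) = 0.
Proof.
  intros S1 S2 S3 HZ Ht. pose proof (Zf_dt _ _ (Zf_dt _ _ (Zf_ds _ _ HZ)) 0 t Ht) as K. revert K.
  unfold f0, dot3, sum3. expand. unfold fpl, fmu, fcs. intro K. nra.
Qed.


Definition ELat (V : v3 -> R) (n1 n2 n3 : F2) (t : R) : v3 :=
  let n := mk3 (n1 0 t) (n2 0 t) (n3 0 t) in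
  let q := mk3 (dt n1 0 t) (dt n2 0 t) (dt n3 0 t) in
  let p := mk3 (dt (dt n1) 0 t) (dt (dt n2) 0 t) (dt (dt n3) 0 t) in
  vadd (mk3 (dt (dt (dt (dt n1))) 0 t) (dt (dt (dt (dt n2))) 0 t) (dt (dt (dt (dt n3))) 0 t))
   (vadd (vscal (2 * norm2 q) p)
    (vadd (vscal (4 * dot q p) q)
     (vadd (vscal (norm2 p) n) (mk3 (pV 0 V n) (pV 1 V n) (pV 2 V n))))).

Lemma L_point_atoms T V n1 n2 n3 t : smooth3 V -> Sm n1 -> Sm n2 -> Sm n3 ->
  Zf T (f0 n1 n2 n3) -> 0 < t < T ->
  ds (FintD V n1 n2 n3) 0 t - dt (GD n1 n2 n3) 0 t =
  dot (proj (mk3 (n1 0 t) (n2 0 t) (n3 0 t)) (ELat V n1 n2 n3 t))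
      (mk3 (ds n1 0 t) (ds n2 0 t) (ds n3 0 t)).
Proof.
  intros HV S1 S2 S3 HZ Ht.
  pose proof (K1_lem T n1 n2 n3 t S1 S2 S3 HZ Ht) as K1.
  pose proof (K3_lem T n1 n2 n3 t S1 S2 S3 HZ Ht) as K3.
  pose proof (K4_lem T n1 n2 n3 t S1 S2 S3 HZ Ht) as K4.
  (unfold FintD, GD, dot3, sum3; cbv zeta; expand).
  (repeat rewrite ds_dt by sm).
  unfold ELat. cbv zeta.
  unfold fpl, fmu, fop, fcs, fV. cbv beta.
  unfold proj, norm2, dot, vadd, vscal, mk3, c1, c2, c3. cbn [fst snd].
  set (P41 := dt (dt (dt (dt n1))) 0 t) in *. set (P42 := dt (dt (dt (dt n2))) 0 t) in *.
  set (P43 := dt (dt (dt (dt n3))) 0 t) in *.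
  set (P31 := dt (dt (dt n1)) 0 t) in *. set (P32 := dt (dt (dt n2)) 0 t) in *.
  set (P33 := dt (dt (dt n3)) 0 t) in *.
  set (P1 := dt (dt n1) 0 t) in *. set (P2 := dt (dt n2) 0 t) in *. set (P3 := dt (dt n3) 0 t) in *.
  set (Q1 := dt n1 0 t) in *. set (Q2 := dt n2 0 t) in *. set (Q3 := dt n3 0 t) in *.
  set (W21 := dt (dt (ds n1)) 0 t) in *. set (W22 := dt (dt (ds n2)) 0 t) in *.
  set (W23 := dt (dt (ds n3)) 0 t) in *.
  set (W11 := dt (ds n1) 0 t) in *. set (W12 := dt (ds n2) 0 t) in *. set (W13 := dt (ds n3) 0 t) in *.
  set (W1 := ds n1 0 t) in *. set (W2 := ds n2 0 t) in *. set (W3 := ds n3 0 t) in *.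
  set (N1 := n1 0 t) in *. set (N2 := n2 0 t) in *. set (N3 := n3 0 t) in *.
  set (G1 := pV 0 V (N1, N2, N3)) in *. set (G2 := pV 1 V (N1, N2, N3)) in *.
  set (G3 := pV 2 V (N1, N2, N3)) in *.
  clearbody P41 P42 P43 P31 P32 P33 P1 P2 P3 Q1 Q2 Q3 W21 W22 W23 W11 W12 W13 W1 W2 W3 N1 N2 N3 G1 G2 G3.
  set (qq := Q1*Q1+Q2*Q2+Q3*Q3). set (qp := Q1*P1+Q2*P2+Q3*P3). set (pp := P1*P1+P2*P2+P3*P3).
  set (E1 := P41 + 2*qq*P1 + 4*qp*Q1 + pp*N1 + G1).
  set (E2 := P42 + 2*qq*P2 + 4*qp*Q2 + pp*N2 + G2).
  set (E3 := P43 + 2*qq*P3 + 4*qp*Q3 + pp*N3 + G3).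
  match type of K1 with ?k1 = 0 => match type of K3 with ?k3 = 0 =>
  match type of K4 with ?k4 = 0 => match goal with |- ?L = ?R =>
    assert (Ecomb : L - R = - (pp - (N1*E1+N2*E2+N3*E3)) * k1
        - (N1*P1+N2*P2+N3*P3) * k4 + 2 * (Q1*W11+Q2*W12+Q3*W13) * k3)
      by (unfold E1, E2, E3, qq, qp, pp; field) end end end end.
  rewrite K1, K3, K4 in Ecomb. apply Rminus_diag_uniq. rewrite Ecomb. ring.
Qed.

Lemma ds_zero (f : F2) t0 : (forall s, f s t0 = f 0 t0) -> ds f 0 t0 = 0.
Proof.
  intros H. unfold ds. rewrite (Derive_ext (fun s' => f s' t0) (fun _ => f 0 t0)).
  - apply (Derive_const _ _).
  - intros s'; apply H.
Qed.

Lemma GD_bd (c : R -> v3) (N : R -> R -> v3) t0 :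
  Sm (fun s t => c1 (N s t)) -> Sm (fun s t => c2 (N s t)) -> Sm (fun s t => c3 (N s t)) ->
  (forall s, N s t0 = c t0) -> (forall s, dn 1 (N s) t0 = dn 1 c t0) ->
  GD (fun s t => c1 (N s t)) (fun s t => c2 (N s t)) (fun s t => c3 (N s t)) 0 t0 = 0.
Proof.
  intros S1 S2 S3 HN HD.
  set (n1 := fun s t => c1 (N s t)) in *. set (n2 := fun s t => c2 (N s t)) in *.
  set (n3 := fun s t => c3 (N s t)) in *.
  assert (W1 : ds n1 0 t0 = 0) by (apply ds_zero; intros s; unfold n1; rewrite !HN; reflexivity).
  assert (W2 : ds n2 0 t0 = 0) by (apply ds_zero; intros s; unfold n2; rewrite !HN; reflexivity).
  assert (W3 : ds n3 0 t0 = 0) by (apply ds_zero; intros s; unfold n3; rewrite !HN; reflexivity).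
  assert (Dn1 : forall s, dt n1 s t0 = c1 (dn 1 c t0)) by (intros s; rewrite <- (HD s); reflexivity).
  assert (Dn2 : forall s, dt n2 s t0 = c2 (dn 1 c t0)) by (intros s; rewrite <- (HD s); reflexivity).
  assert (Dn3 : forall s, dt n3 s t0 = c3 (dn 1 c t0)) by (intros s; rewrite <- (HD s); reflexivity).
  assert (V1 : dt (ds n1) 0 t0 = 0).
  { rewrite <- ds_dt by auto. apply ds_zero. intros s. rewrite !Dn1. reflexivity. }
  assert (V2 : dt (ds n2) 0 t0 = 0).
  { rewrite <- ds_dt by auto. apply ds_zero. intros s. rewrite !Dn2. reflexivity. }
  assert (V3 : dt (ds n3) 0 t0 = 0).
  { rewrite <- ds_dt by auto. apply ds_zero. intros s. rewrite !Dn3. reflexivity. }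
  unfold GD, dot3, sum3, fpl, fmu, fop, fcs. cbv zeta beta.
  rewrite W1, W2, W3, V1, V2, V3. ring.
Qed.

Lemma dn_loc (c : R -> v3) (M : R -> v3) (T t : R) k : 0 < t < T ->
  (forall t, 0 <= t <= T -> M t = c t) -> dn k c t = dn k M t.
Proof.
  intros Ht HM. unfold dn.
  assert (L : locally t (fun y => M y = c y)).
  { eapply filter_imp; [|apply (locally_open_interval T t Ht)].
    intros y Hy. apply HM; lra. }
  f_equal; apply Derive_n_ext_loc; eapply filter_imp; try exact L;
    intros y Hy; simpl; rewrite Hy; reflexivity.
Qed.

Lemma EL_ELat T V (c : R -> v3) (N : R -> R -> v3) t : 0 < t < T ->
  (forall t, 0 <= t <= T -> N 0 t = c t) ->
  EL_expr V c t = ELat V (fun s t => c1 (N s t)) (fun s t => c2 (N s t)) (fun s t => c3 (N s t)) t.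
Proof.
  intros Ht HN.
  unfold EL_expr.
  rewrite !(dn_loc c (N 0) T t _ Ht HN).
  assert (Hc : c t = mk3 (c1 (N 0 t)) (c2 (N 0 t)) (c3 (N 0 t))).
  { rewrite <- HN by lra. apply v3_eta. }
  unfold grad. rewrite Hc. unfold ELat. cbv zeta. reflexivity.
Qed.

Lemma first_variation T (HT : 0 < T) V (HV : smooth3 V) (c : R -> v3) (N : R -> R -> v3)
  (HN : admissible_variation T c N) :
  is_derive (fun s => action T V (N s)) 0
   (RInt (fun t => dot (proj (c t) (EL_expr V c t))
      (mk3 (ds (fun s t => c1 (N s t)) 0 t) (ds (fun s t => c2 (N s t)) 0 t)
           (ds (fun s t => c3 (N s t)) 0 t))) 0 T).
Proof.
  destruct HN as [H1 [H2 [H3 [H0 [HSN Hend]]]]].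
  pose proof (smooth2_Sm _ H1) as S1. pose proof (smooth2_Sm _ H2) as S2.
  pose proof (smooth2_Sm _ H3) as S3.
  set (n1 := fun s t => c1 (N s t)) in *. set (n2 := fun s t => c2 (N s t)) in *.
  set (n3 := fun s t => c3 (N s t)) in *.
  apply (is_derive_ext (fun s => RInt (FintD V n1 n2 n3 s) 0 T)).
  { intros s. symmetry. apply L_action; auto. }
  assert (HZ : Zf T (f0 n1 n2 n3)).
  { intros s t Ht. unfold f0, dot3, sum3, fpl, fmu, fcs.
    pose proof (HSN s t ltac:(lra)) as HH. unfold onS2, dot in HH.
    unfold n1, n2, n3. lra. }
  replace (RInt _ 0 T) with (RInt (ds (FintD V n1 n2 n3) 0) 0 T).
  { apply L_deriv. apply Sm_FintD; auto. }
  rewrite (L_split (FintD V n1 n2 n3) (GD n1 n2 n3) T).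
  2: apply Sm_FintD; auto.
  2: apply Sm_GD; auto.
  2: { apply (GD_bd c N 0); auto; intros s; apply Hend. }
  2: { apply (GD_bd c N T); auto; intros s; apply Hend. }
  apply RInt_ext. intros t Ht. rewrite Rmin_left, Rmax_right in Ht by lra.
  rewrite (L_point_atoms T V n1 n2 n3 t HV S1 S2 S3 HZ Ht).
  rewrite (EL_ELat T V c N t Ht H0).
  assert (Hc : c t = mk3 (n1 0 t) (n2 0 t) (n3 0 t)).
  { rewrite <- H0 by lra. apply v3_eta. }
  rewrite Hc. reflexivity.
Qed.

Definition fT : F2 := fun _ t => t.
Lemma D0_fT : D0 fT.
Proof.
  intros s t; unfold fT; split; [|split].
  - apply (ex_derive_const (K := R_AbsRing) (V := R_NormedModule)).
  - apply (ex_derive_id (K := R_AbsRing)).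
  - apply continuity_2d_pt_id2.
Qed.
Lemma ds_fT : ds fT = fcs 0.
Proof.
  unfold ds, fT, fcs. apply functional_extensionality; intro s;
  apply functional_extensionality; intro t. apply (Derive_const _ _).
Qed.
Lemma dt_fT : dt fT = fcs 1.
Proof.
  unfold dt, fT, fcs. apply functional_extensionality; intro s;
  apply functional_extensionality; intro t. apply is_derive_unique. apply (is_derive_id t).
Qed.
Lemma Sm_fT : Sm fT.
Proof.
  intros n; destruct n; simpl.
  - apply D0_fT.
  - rewrite ds_fT, dt_fT. split; [apply D0_fT|split; apply Dn_fcs].
Qed.

Lemma smooth1_Dn g k : smooth1 g -> smooth1 (Derive_n g k).
Proof.
  intros Hg j x.
  apply (ex_derive_ext (Derive_n g (j + k))).
  - intros y. symmetry. apply Derive_n_comp.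
  - apply Hg.
Qed.

Ltac sm ::= repeat first [ assumption | apply Sm_fpl | apply Sm_fmu | apply Sm_fop | apply Sm_fcs
  | apply Sm_fS | apply Sm_fT | apply Sm_fV | apply smooth3_pV | apply Sm_ds | apply Sm_dt
  | apply Sm_flift | apply smooth1_Dn ].


Definition CL (c : R -> v3) (i : nat) : F2 :=
  match i with
  | O => flift (fun t => c1 (c t))
  | 1%nat => flift (fun t => c2 (c t))
  | _ => flift (fun t => c3 (c t))
  end.
Definition DK (c : R -> v3) (k i : nat) : F2 :=
  match i with
  | O => flift (Derive_n (fun t => c1 (c t)) k)
  | 1%nat => flift (Derive_n (fun t => c2 (c t)) k)
  | _ => flift (Derive_n (fun t => c3 (c t)) k)
  end.
Definition GG V c (j : nat) : F2 := fV (pV j V) (CL c 0) (CL c 1) (CL c 2).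
Definition ELc V c (i : nat) : F2 :=
  fpl (DK c 4 i) (fpl (fmu (fmu (fcs 2) (dot3 (DK c 1 0) (DK c 1 1) (DK c 1 2) (DK c 1 0) (DK c 1 1) (DK c 1 2))) (DK c 2 i))
   (fpl (fmu (fmu (fcs 4) (dot3 (DK c 1 0) (DK c 1 1) (DK c 1 2) (DK c 2 0) (DK c 2 1) (DK c 2 2))) (DK c 1 i))
    (fpl (fmu (dot3 (DK c 2 0) (DK c 2 1) (DK c 2 2) (DK c 2 0) (DK c 2 1) (DK c 2 2)) (CL c i)) (GG V c i)))).
Definition PEc V c (i : nat) : F2 :=
  fpl (ELc V c i) (fmu (fop (dot3 (CL c 0) (CL c 1) (CL c 2) (ELc V c 0) (ELc V c 1) (ELc V c 2))) (CL c i)).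

Definition PEv V c t := proj (c t) (EL_expr V c t).

Lemma PEc_pt V c s t :
  PEc V c 0 s t = c1 (PEv V c t) /\ PEc V c 1 s t = c2 (PEv V c t) /\ PEc V c 2 s t = c3 (PEv V c t).
Proof.
  unfold PEc, ELc, GG, CL, DK, fV, flift, fpl, fmu, fop, fcs, dot3, sum3. cbv beta.
  rewrite <- (v3_eta (c t)).
  unfold PEv, proj, EL_expr, vadd, vscal, norm2, dot, dn, grad, mk3, c1, c2, c3. cbn [fst snd].
  split; [|split]; reflexivity.
Qed.

Lemma Sm_CL c i : smooth_curve c -> Sm (CL c i).
Proof.
  intros [H1 [H2 H3]]. destruct i as [|[|i]]; simpl; apply Sm_flift; auto.
Qed.
Lemma Sm_DK c k i : smooth_curve c -> Sm (DK c k i).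
Proof.
  intros [H1 [H2 H3]]. destruct i as [|[|i]]; simpl; apply Sm_flift; apply smooth1_Dn; auto.
Qed.
Lemma Sm_PEc V c i : smooth3 V -> smooth_curve c -> Sm (PEc V c i).
Proof.
  intros HV Hc.
  pose proof (Sm_CL c 0 Hc). pose proof (Sm_CL c 1 Hc). pose proof (Sm_CL c 2 Hc).
  pose proof (Sm_CL c i Hc).
  pose proof (Sm_DK c 1 0 Hc). pose proof (Sm_DK c 1 1 Hc). pose proof (Sm_DK c 1 2 Hc).
  pose proof (Sm_DK c 2 0 Hc). pose proof (Sm_DK c 2 1 Hc). pose proof (Sm_DK c 2 2 Hc).
  pose proof (Sm_DK c 4 0 Hc). pose proof (Sm_DK c 4 1 Hc). pose proof (Sm_DK c 4 2 Hc).
  pose proof (Sm_DK c 4 i Hc). pose proof (Sm_DK c 1 i Hc). pose proof (Sm_DK c 2 i Hc).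
  assert (forall j, Sm (GG V c j)) by (intros j; unfold GG; sm).
  assert (forall j, Sm (ELc V c j)).
  { intros j. pose proof (Sm_DK c 4 j Hc). pose proof (Sm_DK c 1 j Hc).
    pose proof (Sm_DK c 2 j Hc). pose proof (Sm_CL c j Hc).
    unfold ELc, dot3, sum3. sm. }
  pose proof (H16 0%nat). pose proof (H16 1%nat). pose proof (H16 2%nat). pose proof (H16 i).
  unfold PEc, dot3, sum3. sm.
Qed.

Definition comp (i : nat) (u : v3) : R := match i with O => c1 u | 1%nat => c2 u | _ => c3 u end.

Definition PL (T : R) : F2 := fmu (fmu fT fT) (fmu (fpl (fcs T) (fop fT)) (fpl (fcs T) (fop fT))).
Definition ETc T V c i : F2 := fmu (PL T) (PEc V c i).
Definition AAc T V c : F2 := dot3 (ETc T V c 0) (ETc T V c 1) (ETc T V c 2)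
   (ETc T V c 0) (ETc T V c 1) (ETc T V c 2).
Definition Ddc T V c : F2 := fpl (fcs 1) (fmu (fmu fS fS) (AAc T V c)).
Definition Ac T V c : F2 := fpl (fcs 1) (fop (fmu (fmu fS fS) (AAc T V c))).
Definition Nbar T V c i : F2 :=
  fmu (fpl (fmu (Ac T V c) (CL c i)) (fmu (fmu (fcs 2) fS) (ETc T V c i))) (finv (Ddc T V c)).

Definition poly (T t : R) : R := t * t * ((T + - t) * (T + - t)).
Definition et T V c i t : R := poly T t * comp i (PEv V c t).
Definition aa T V c t : R := et T V c 0 t * et T V c 0 t + et T V c 1 t * et T V c 1 t
   + et T V c 2 t * et T V c 2 t.
Definition Nf (x e a s : R) : R := ((1 + - (s * s * a)) * x + 2 * s * e) * / (1 + s * s * a).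
Definition Nc T V c (s t : R) : v3 :=
  mk3 (Nf (c1 (c t)) (et T V c 0 t) (aa T V c t) s)
      (Nf (c2 (c t)) (et T V c 1 t) (aa T V c t) s)
      (Nf (c3 (c t)) (et T V c 2 t) (aa T V c t) s).

Lemma PEc_comp V c i s t : (i <= 2)%nat -> PEc V c i s t = comp i (PEv V c t).
Proof.
  intros Hi. destruct (PEc_pt V c s t) as [P0 [P1 P2]].
  destruct i as [|[|[|i]]]; simpl; auto; lia.
Qed.

Lemma ETc_pt T V c i s t : (i <= 2)%nat -> ETc T V c i s t = et T V c i t.
Proof.
  intros Hi. unfold ETc, fmu. rewrite PEc_comp by auto. reflexivity.
Qed.
Lemma AAc_pt T V c s t : AAc T V c s t = aa T V c t.
Proof.
  unfold AAc, dot3, sum3, fpl, fmu. rewrite !ETc_pt by lia. reflexivity.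
Qed.
Lemma Nbar_pt T V c i s t : (i <= 2)%nat -> Nbar T V c i s t = Nf (comp i (c t)) (et T V c i t) (aa T V c t) s.
Proof.
  intros Hi. unfold Nbar, fmu, fpl, finv. unfold Ac, Ddc, fpl, fmu, fop, fcs, fS.
  rewrite ETc_pt by auto. rewrite AAc_pt.
  destruct i as [|[|[|i]]]; try lia; reflexivity.
Qed.

Lemma AAc_nonneg T V c s t : 0 <= AAc T V c s t.
Proof. rewrite AAc_pt. unfold aa. nra. Qed.

Lemma Sm_Nbar T V c i : smooth3 V -> smooth_curve c -> Sm (Nbar T V c i).
Proof.
  intros HV Hc.
  assert (HE : forall j, Sm (ETc T V c j)).
  { intros j. unfold ETc, PL. pose proof (Sm_PEc V c j HV Hc). sm. }
  assert (HA : Sm (AAc T V c)).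
  { unfold AAc, dot3, sum3. pose proof (HE 0%nat); pose proof (HE 1%nat); pose proof (HE 2%nat). sm. }
  pose proof (HE i). pose proof (Sm_CL c i Hc).
  unfold Nbar. apply Sm_fmu.
  - unfold Ac. sm.
  - apply Sm_finv.
    + intros s t. unfold Ddc, fpl, fmu, fcs, fS. pose proof (AAc_nonneg T V c s t). nra.
    + unfold Ddc. sm.
Qed.

Lemma cont_eps (g : R -> R) x0 : continuous g x0 -> forall eps, 0 < eps ->
  exists del, 0 < del /\ forall y, Rabs (y - x0) < del -> Rabs (g y - g x0) < eps.
Proof.
  intros Hc eps He.
  destruct (Hc (ball (g x0) (mkposreal eps He)) (locally_ball _ _)) as [d Hd].
  exists d. split; [apply cond_pos|]. intros y Hy. apply (Hd y). exact Hy.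
Qed.

Lemma ex_RInt_cont (f : R -> R) a b : (forall x, Rmin a b <= x <= Rmax a b -> continuous f x) ->
  ex_RInt f a b.
Proof. intros H. apply (ex_RInt_continuous (V := R_CompleteNormedModule)). exact H. Qed.

Lemma int_pos_zero (f : R -> R) T : 0 < T -> (forall x, 0 <= x <= T -> continuous f x) ->
  (forall x, 0 < x < T -> 0 <= f x) -> RInt f 0 T = 0 -> forall x, 0 < x < T -> f x = 0.
Proof.
  intros HT Hc Hp HI x0 Hx0.
  destruct (Rle_lt_or_eq_dec 0 (f x0) (Hp x0 Hx0)) as [Hlt|Heq]; [|auto].
  exfalso.
  destruct (cont_eps f x0 (Hc x0 ltac:(lra)) (f x0 / 2) ltac:(lra)) as [del [Hdel Hd]].
  set (d := Rmin (del / 2) (Rmin (x0 / 2) ((T - x0) / 2))).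
  assert (Hd0 : 0 < d) by (unfold d; repeat apply Rmin_pos; lra).
  assert (Hd1 : d <= del / 2 /\ d <= x0 / 2 /\ d <= (T - x0) / 2).
  { unfold d. pose proof (Rmin_l (del/2) (Rmin (x0/2) ((T-x0)/2)));
    pose proof (Rmin_r (del/2) (Rmin (x0/2) ((T-x0)/2)));
    pose proof (Rmin_l (x0/2) ((T-x0)/2)); pose proof (Rmin_r (x0/2) ((T-x0)/2)); lra. }
  set (a := x0 - d). set (b := x0 + d).
  assert (Ex : forall u v, 0 <= u -> u <= v -> v <= T -> ex_RInt f u v).
  { intros u v Hu Huv Hv. apply ex_RInt_cont. intros x Hx.
    rewrite Rmin_left, Rmax_right in Hx by lra. apply Hc; lra. }
  assert (C1 : RInt f 0 a + RInt f a b + RInt f b T = RInt f 0 T).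
  { pose proof (RInt_Chasles (V := R_CompleteNormedModule) f 0 a b (Ex 0 a ltac:(lra) ltac:(unfold a; lra) ltac:(unfold a; lra))
        (Ex a b ltac:(unfold a; lra) ltac:(unfold a, b; lra) ltac:(unfold b; lra))) as E1.
    pose proof (RInt_Chasles (V := R_CompleteNormedModule) f 0 b T (Ex 0 b ltac:(lra) ltac:(unfold b; lra) ltac:(unfold b; lra))
        (Ex b T ltac:(unfold b; lra) ltac:(unfold b; lra) ltac:(lra))) as E2.
    unfold plus in E1, E2; simpl in E1, E2. rewrite E1. exact E2. }
  assert (I1 : 0 <= RInt f 0 a).
  { replace 0 with (RInt (fun _ => 0) 0 a) at 1.
    - apply RInt_le; [unfold a; lra| |apply Ex; unfold a; lra|].
      + apply ex_RInt_const.
      + intros x Hx. apply Hp. unfold a in Hx; lra.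
    - rewrite RInt_const. unfold scal; simpl; unfold mult; simpl. ring. }
  assert (I3 : 0 <= RInt f b T).
  { replace 0 with (RInt (fun _ => 0) b T) at 1.
    - apply RInt_le; [unfold b; lra| |apply Ex; unfold b; lra|].
      + apply ex_RInt_const.
      + intros x Hx. apply Hp. unfold b in Hx; lra.
    - rewrite RInt_const. unfold scal; simpl; unfold mult; simpl. ring. }
  assert (I2 : (b - a) * (f x0 / 2) <= RInt f a b).
  { replace ((b - a) * (f x0 / 2)) with (RInt (fun _ => f x0 / 2) a b).
    - apply RInt_le; [unfold a, b; lra| |apply Ex; unfold a, b; lra|].
      + apply ex_RInt_const.
      + intros x Hx. assert (Rabs (x - x0) < del).
        { unfold a, b in Hx. unfold Rabs; destruct Rcase_abs; lra. }
        specialize (Hd x H). unfold Rabs in Hd; destruct Rcase_abs in Hd; lra.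
    - rewrite RInt_const. unfold scal; simpl; unfold mult; simpl. ring. }
  assert (0 < (b - a) * (f x0 / 2)).
  { apply Rmult_lt_0_compat; unfold a, b; lra. }
  lra.
Qed.

Lemma ext_closed (g : R -> R) T x0 : 0 < T -> 0 <= x0 <= T -> continuous g x0 ->
  (forall x, 0 < x < T -> g x = 0) -> g x0 = 0.
Proof.
  intros HT Hx Hc Hz.
  destruct (Req_dec (g x0) 0) as [E|E]; auto. exfalso.
  assert (Hp : 0 < Rabs (g x0)) by (apply Rabs_pos_lt; auto).
  destruct (cont_eps g x0 Hc (Rabs (g x0)) Hp) as [del [Hdel Hd]].
  set (lam := Rmin 1 (del / T)).
  assert (Hl : 0 < lam /\ lam <= 1 /\ lam * T <= del).
  { unfold lam. split; [apply Rmin_pos; [lra|apply Rdiv_lt_0_compat; lra]|].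
    split; [apply Rmin_l|].
    pose proof (Rmin_r 1 (del / T)).
    apply (Rmult_le_compat_r T) in H; [|lra].
    replace (del / T * T) with del in H by (field; lra). exact H. }
  set (y := x0 + lam * (T / 2 - x0)).
  assert (Hy : 0 < y < T).
  { unfold y. destruct Hl as [? [? ?]]. split; nra. }
  assert (Hyd : Rabs (y - x0) < del).
  { unfold y. replace (x0 + lam * (T / 2 - x0) - x0) with (lam * (T/2 - x0)) by ring.
    rewrite Rabs_mult, (Rabs_pos_eq lam) by lra.
    assert (Rabs (T/2 - x0) <= T/2) by (unfold Rabs; destruct Rcase_abs; lra).
    destruct Hl as [? [? ?]].
    assert (lam * Rabs (T/2 - x0) <= lam * (T/2)) by (apply Rmult_le_compat_l; lra).
    lra. }
  specialize (Hd y Hyd). rewrite (Hz y Hy) in Hd.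
  replace (0 - g x0) with (- g x0) in Hd by ring. rewrite Rabs_Ropp in Hd. lra.
Qed.

Lemma Nf_0 x e a : Nf x e a 0 = x.
Proof.
  unfold Nf. replace (1 + 0 * 0 * a) with 1 by ring. rewrite Rinv_1. ring.
Qed.
Lemma Nf_e0 x s : Nf x 0 0 s = x.
Proof.
  unfold Nf. replace (1 + s * s * 0) with 1 by ring. rewrite Rinv_1. ring.
Qed.

Lemma Nc_s0 T V c t : Nc T V c 0 t = c t.
Proof. unfold Nc. rewrite !Nf_0. symmetry. apply v3_eta. Qed.

Lemma poly_0 T : poly T 0 = 0.
Proof. unfold poly. ring. Qed.
Lemma poly_T T : poly T T = 0.
Proof. unfold poly. ring. Qed.

Lemma et_bd T V c i t0 : poly T t0 = 0 -> et T V c i t0 = 0.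
Proof. intros H. unfold et. rewrite H. ring. Qed.
Lemma aa_bd T V c t0 : poly T t0 = 0 -> aa T V c t0 = 0.
Proof. intros H. unfold aa. rewrite !(et_bd T V c _ t0 H). ring. Qed.

Lemma Nc_bd T V c s t0 : poly T t0 = 0 -> Nc T V c s t0 = c t0.
Proof.
  intros H. unfold Nc. rewrite (aa_bd T V c t0 H), !(et_bd T V c _ t0 H), !Nf_e0.
  symmetry; apply v3_eta.
Qed.

Lemma dot_proj x u : dot x (proj x u) = dot x u * (1 - dot x x).
Proof. unfold proj, dot, vadd, vscal, mk3, c1, c2, c3; simpl. ring. Qed.

Lemma Nc_sphere T V c s t : onS2 (c t) -> onS2 (Nc T V c s t).
Proof.
  intros HS. unfold onS2 in *.
  assert (Hce : c1 (c t) * et T V c 0 t + c2 (c t) * et T V c 1 t + c3 (c t) * et T V c 2 t = 0).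
  { unfold et, comp. pose proof (dot_proj (c t) (EL_expr V c t)) as Hd.
    rewrite HS in Hd. unfold PEv.
    transitivity (poly T t * dot (c t) (proj (c t) (EL_expr V c t))).
    - unfold dot. ring.
    - rewrite Hd. ring. }
  unfold dot in HS.
  set (x1 := c1 (c t)) in *. set (x2 := c2 (c t)) in *. set (x3 := c3 (c t)) in *.
  set (e1 := et T V c 0 t) in *. set (e2 := et T V c 1 t) in *. set (e3 := et T V c 2 t) in *.
  unfold Nc, aa. fold e1 e2 e3. fold x1 x2 x3.
  set (a := e1 * e1 + e2 * e2 + e3 * e3).
  assert (Ha : 0 <= a) by (unfold a; nra).
  assert (HD : 1 + s * s * a <> 0) by nra.
  unfold dot, Nf, mk3, c1, c2, c3; simpl.
  set (iD := / (1 + s * s * a)).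
  assert (HiD : (1 + s * s * a) * iD = 1) by (unfold iD; field; auto).
  transitivity ((((1 + - (s * s * a)) * (1 + - (s * s * a))) * (x1*x1+x2*x2+x3*x3)
     + 4 * s * (1 + - (s * s * a)) * (x1*e1+x2*e2+x3*e3) + 4 * s * s * a) * (iD * iD)).
  { unfold a. ring. }
  rewrite HS, Hce.
  transitivity (((1 + s * s * a) * iD) * ((1 + s * s * a) * iD)).
  { ring. }
  rewrite HiD. ring.
Qed.

Lemma dNf_s x e a : is_derive (fun s => Nf x e a s) 0 (2 * e).
Proof.
  unfold Nf. auto_derive.
  - replace (1 + 0 * 0 * a) with 1 by ring. lra.
  - replace (1 + 0 * 0 * a) with 1 by ring. field.
Qed.

Lemma dNf_t (x e a : R -> R) s t0 : ex_derive x t0 -> is_derive e t0 0 -> is_derive a t0 0 ->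
  e t0 = 0 -> a t0 = 0 ->
  is_derive (fun t => Nf (x t) (e t) (a t) s) t0 (Derive x t0).
Proof.
  intros Hx He Ha He0 Ha0.
  assert (Ee : Derive e t0 = 0) by (apply is_derive_unique; exact He).
  assert (Ea : Derive a t0 = 0) by (apply is_derive_unique; exact Ha).
  unfold Nf. auto_derive.
  - repeat split; auto; try (eexists; eassumption).
    rewrite Ha0. replace (1 + s * s * 0) with 1 by ring. lra.
  - assert (Ex : Derive (fun y => x y) t0 = Derive x t0) by reflexivity.
    assert (Ee' : Derive (fun y => e y) t0 = 0) by exact Ee.
    assert (Ea' : Derive (fun y => a y) t0 = 0) by exact Ea.
    rewrite Ex, Ee', Ea', He0, Ha0. field.
Qed.

Lemma exd_comp V c i t : smooth3 V -> smooth_curve c -> (i <= 2)%nat ->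
  ex_derive (fun t => comp i (PEv V c t)) t.
Proof.
  intros HV Hc Hi.
  destruct (Sm_D0 _ (Sm_PEc V c i HV Hc) 0 t) as [_ [H _]].
  apply (ex_derive_ext (fun t' => PEc V c i 0 t')); [|exact H].
  intros y. apply PEc_comp; auto.
Qed.

Lemma poly_d0 T : is_derive (poly T) 0 0.
Proof. unfold poly. auto_derive; auto. ring. Qed.
Lemma poly_dT T : is_derive (poly T) T 0.
Proof. unfold poly. auto_derive; auto. ring. Qed.

Lemma et_d_bd T V c i t0 : smooth3 V -> smooth_curve c -> (i <= 2)%nat ->
  poly T t0 = 0 -> is_derive (poly T) t0 0 -> is_derive (et T V c i) t0 0.
Proof.
  intros HV Hc Hi Hp Hdp.
  destruct (exd_comp V c i t0 HV Hc Hi) as [d Hd].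
  unfold et.
  apply is_derive_Reals. rewrite is_derive_Reals in Hdp, Hd.
  replace 0 with (0 * comp i (PEv V c t0) + poly T t0 * d) by (rewrite Hp; ring).
  apply (derivable_pt_lim_mult (poly T) (fun t => comp i (PEv V c t))); auto.
Qed.

Lemma aa_d_bd T V c t0 : smooth3 V -> smooth_curve c ->
  poly T t0 = 0 -> is_derive (poly T) t0 0 -> is_derive (aa T V c) t0 0.
Proof.
  intros HV Hc Hp Hdp.
  pose proof (et_d_bd T V c 0 t0 HV Hc ltac:(lia) Hp Hdp) as E0.
  pose proof (et_d_bd T V c 1 t0 HV Hc ltac:(lia) Hp Hdp) as E1.
  pose proof (et_d_bd T V c 2 t0 HV Hc ltac:(lia) Hp Hdp) as E2.
  unfold aa. apply is_derive_Reals.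
  rewrite is_derive_Reals in E0, E1, E2.
  replace 0 with (0 * et T V c 0 t0 + et T V c 0 t0 * 0 + (0 * et T V c 1 t0 + et T V c 1 t0 * 0)
     + (0 * et T V c 2 t0 + et T V c 2 t0 * 0)) by ring.
  apply derivable_pt_lim_plus; [apply derivable_pt_lim_plus|]; apply derivable_pt_lim_mult; auto.
Qed.

Lemma dn1_Nc_bd T V c s t0 : smooth3 V -> smooth_curve c ->
  poly T t0 = 0 -> is_derive (poly T) t0 0 -> dn 1 (Nc T V c s) t0 = dn 1 c t0.
Proof.
  intros HV Hc Hp Hdp.
  destruct Hc as [Hc1 [Hc2 Hc3]].
  pose proof (aa_d_bd T V c t0 HV (conj Hc1 (conj Hc2 Hc3)) Hp Hdp) as HA.
  unfold dn, Nc. f_equal; simpl; apply is_derive_unique.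
  - apply dNf_t; [exact (Hc1 O t0)| |exact HA|apply et_bd; auto|apply aa_bd; auto].
    apply et_d_bd; auto. split; auto.
  - apply dNf_t; [exact (Hc2 O t0)| |exact HA|apply et_bd; auto|apply aa_bd; auto].
    apply et_d_bd; auto. split; auto.
  - apply dNf_t; [exact (Hc3 O t0)| |exact HA|apply et_bd; auto|apply aa_bd; auto].
    apply et_d_bd; auto. split; auto.
Qed.

Lemma Nc_adm T V c : 0 < T -> smooth3 V -> smooth_curve c ->
  (forall t, 0 <= t <= T -> onS2 (c t)) -> admissible_variation T c (Nc T V c).
Proof.
  intros HT HV Hc HS.
  assert (Hsm : forall i, (i <= 2)%nat ->
     (fun s t => comp i (Nc T V c s t)) = Nbar T V c i).
  { intros i Hi. apply functional_extensionality; intro s;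
    apply functional_extensionality; intro t. rewrite Nbar_pt by auto.
    destruct i as [|[|[|i]]]; try lia; reflexivity. }
  split; [|split; [|split; [|split; [|split]]]].
  - apply Sm_smooth2. change (Sm (fun s t => comp 0 (Nc T V c s t))).
    rewrite Hsm by lia. apply Sm_Nbar; auto.
  - apply Sm_smooth2. change (Sm (fun s t => comp 1 (Nc T V c s t))).
    rewrite Hsm by lia. apply Sm_Nbar; auto.
  - apply Sm_smooth2. change (Sm (fun s t => comp 2 (Nc T V c s t))).
    rewrite Hsm by lia. apply Sm_Nbar; auto.
  - intros t _. apply Nc_s0.
  - intros s t Ht. apply Nc_sphere. auto.
  - intros s. split; [|split; [|split]].
    + apply Nc_bd, poly_0.
    + apply Nc_bd, poly_T.
    + apply dn1_Nc_bd; auto; [apply poly_0|apply poly_d0].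
    + apply dn1_Nc_bd; auto; [apply poly_T|apply poly_dT].
Qed.

Lemma w_eq T V c i t : (i <= 2)%nat ->
  ds (fun s t => comp i (Nc T V c s t)) 0 t = 2 * et T V c i t.
Proof.
  intros Hi. unfold ds. apply is_derive_unique.
  destruct i as [|[|[|i]]]; try lia; apply dNf_s.
Qed.

Lemma cont_f (g0 g1 g2 : R -> R) T x : continuous g0 x -> continuous g1 x -> continuous g2 x ->
  continuous (fun t => 2 * poly T t * (g0 t * g0 t + g1 t * g1 t + g2 t * g2 t)) x.
Proof.
  intros H0 H1 H2. apply continuity_pt_filterlim.
  apply continuity_pt_filterlim in H0. apply continuity_pt_filterlim in H1.
  apply continuity_pt_filterlim in H2.
  unfold poly.
  assert (Cid : continuity_pt (fun t => t) x) by apply continuity_pt_id.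
  assert (Cc : forall a, continuity_pt (fun _ => a) x) by (intros; apply continuity_pt_const; intros u v; auto).
  apply continuity_pt_mult; [apply continuity_pt_mult|].
  - apply Cc.
  - apply continuity_pt_mult; apply continuity_pt_mult; auto;
    apply continuity_pt_plus; auto; apply continuity_pt_opp; auto.
  - apply continuity_pt_plus; [apply continuity_pt_plus|]; apply continuity_pt_mult; auto.
Qed.

Lemma nonneg_f a b c T x : 0 <= 2 * poly T x * (a * a + b * b + c * c).
Proof.
  unfold poly. pose proof (Rle_0_sqr x). pose proof (Rle_0_sqr (T + - x)).
  pose proof (Rle_0_sqr a). pose proof (Rle_0_sqr b). pose proof (Rle_0_sqr c).
  unfold Rsqr in *.
  apply Rmult_le_pos; [apply Rmult_le_pos; [lra|apply Rmult_le_pos; auto]|lra].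
Qed.

Theorem mainTheorem2 (T : R) (HT : 0 < T) (V : v3 -> R) (HV : smooth3 V)
  (c : R -> v3) (Hc : smooth_curve c)
  (HS : forall t, 0 <= t <= T -> onS2 (c t)) :
  qrc_obstacle T V c <->
  (forall t, 0 <= t <= T -> proj (c t) (EL_expr V c t) = v3zero).
Proof.
  split.
  - intros Hq.
    pose proof (Nc_adm T V c HT HV Hc HS) as Hadm.
    pose proof (Hq _ Hadm) as H1.
    pose proof (first_variation T HT V HV c _ Hadm) as H2.
    assert (HI : RInt (fun t => 2 * poly T t * (comp 0 (PEv V c t) * comp 0 (PEv V c t)
        + comp 1 (PEv V c t) * comp 1 (PEv V c t) + comp 2 (PEv V c t) * comp 2 (PEv V c t))) 0 T = 0).
    { match type of H2 with is_derive _ _ ?v =>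
        assert (Eq : v = 0) by (rewrite <- (is_derive_unique _ _ _ H2); exact (is_derive_unique _ _ _ H1))
      end.
      etransitivity; [|exact Eq].
      apply RInt_ext. intros t _.
      change (fun s t => c1 (Nc T V c s t)) with (fun s t => comp 0 (Nc T V c s t)).
      change (fun s t => c2 (Nc T V c s t)) with (fun s t => comp 1 (Nc T V c s t)).
      change (fun s t => c3 (Nc T V c s t)) with (fun s t => comp 2 (Nc T V c s t)).
      rewrite !w_eq by lia. unfold et. fold (PEv V c t).
      unfold dot, comp, mk3, c1, c2, c3; simpl. ring. }
    assert (Hcomp : forall i, (i <= 2)%nat -> forall x, continuous (fun t => comp i (PEv V c t)) x).
    { intros i Hi x. apply (ex_derive_continuous (K := R_AbsRing) (V := R_NormedModule)).
      apply exd_comp; auto. }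
    match type of HI with RInt ?f _ _ = _ => pose proof (int_pos_zero f T HT) as Hz end.
    specialize (Hz (fun x _ => cont_f _ _ _ T x (Hcomp 0%nat ltac:(lia) x)
       (Hcomp 1%nat ltac:(lia) x) (Hcomp 2%nat ltac:(lia) x))).
    specialize (Hz (fun x _ => nonneg_f _ _ _ T x) HI).
    assert (Hzero : forall i, (i <= 2)%nat -> forall x, 0 < x < T -> comp i (PEv V c x) = 0).
    { intros i Hi x Hx. specialize (Hz x Hx).
      assert (Hp : 0 < poly T x).
      { unfold poly. apply Rmult_lt_0_compat; apply Rmult_lt_0_compat; lra. }
      assert (Hs : comp 0 (PEv V c x) * comp 0 (PEv V c x) + comp 1 (PEv V c x) * comp 1 (PEv V c x)
                   + comp 2 (PEv V c x) * comp 2 (PEv V c x) = 0).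
      { apply (Rmult_eq_reg_l (2 * poly T x)); [|nra]. rewrite Hz. ring. }
      destruct i as [|[|[|i]]]; try lia; nra. }
    intros t Ht.
    assert (Hf : forall i, (i <= 2)%nat -> comp i (PEv V c t) = 0).
    { intros i Hi. apply (ext_closed (fun t => comp i (PEv V c t)) T t HT Ht (Hcomp i Hi t)).
      apply Hzero; auto. }
    change (PEv V c t = v3zero). rewrite (v3_eta (PEv V c t)).
    pose proof (Hf 0%nat ltac:(lia)) as F0. pose proof (Hf 1%nat ltac:(lia)) as F1.
    pose proof (Hf 2%nat ltac:(lia)) as F2.
    change (c1 (PEv V c t) = 0) in F0. change (c2 (PEv V c t) = 0) in F1.
    change (c3 (PEv V c t) = 0) in F2.
    rewrite F0, F1, F2. reflexivity.
  - intros HPE N Hadm.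
    pose proof (first_variation T HT V HV c N Hadm) as H2.
    match type of H2 with is_derive _ _ ?v => replace v with 0 in H2 end; [exact H2|].
    rewrite (RInt_ext _ (fun _ => 0)).
    + rewrite RInt_const. unfold scal; simpl; unfold mult; simpl. ring.
    + intros t Ht. rewrite Rmin_left, Rmax_right in Ht by lra.
      rewrite HPE by lra. unfold dot, v3zero, mk3, c1, c2, c3; simpl. ring.
Qed.
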